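(* For a finitely complete category $\mathbb E$, the following are equivalent: (1) for every object $X$, every internal group in the fiber $Pt_X\mathbb E$ is trivial (its underlying split epimorphism is an isomorphism); (2) every internal groupoid in $\mathbb E$ is an equivalence relation, i.e. for every internal groupoid with object of objects $X_0$ and object of arrows $X_1$, the morphism $(d_0,d_1):X_1\to X_0\times X_0$ is a monomorphism. Moreover, such a category has the property that every object carrying an internal associative Mal'tsev structure is a subobject of $1$.
   Context: $Pt_X\mathbb E$ is the category of triples $(A,f,s)$ with $f:A\to X$, $s:X\to A$, $fs=1_X$, morphisms commuting with $f$ and $s$; products are pullbacks over $X$ and the terminal object is $(X,1_X,1_X)$. An internal groupoid in $\mathbb E$ is an internal category (objects $X_0$, arrows $X_1$, domain/codomain $d_0,d_1$, identities, associative unital composition on $X_1\times_{X_0}X_1$) in which every arrow is invertible. An associative Mal'tsev structure on $X$ is $p:X^3\to X$ with $p(x,y,y)=x=p(y,y,x)$ and $p(x,y,p(z,u,v))=p(p(x,y,z),u,v)$. *)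

(* Defs.v *)
From Stdlib Require Import Setoid.

Set Implicit Arguments.
Unset Strict Implicit.

Record Category := {
  ob :> Type;
  hom : ob -> ob -> Type;
  idm : forall A, hom A A;
  cmp : forall A B D, hom B D -> hom A B -> hom A D;
  cmp_assoc : forall A B D E (h : hom D E) (g : hom B D) (f : hom A B),
      cmp h (cmp g f) = cmp (cmp h g) f;
  cmp_id_l : forall A B (f : hom A B), cmp (idm B) f = f;
  cmp_id_r : forall A B (f : hom A B), cmp f (idm A) = f }.

Arguments hom {c} _ _.
Arguments idm {c} A.
Arguments cmp {c A B D} _ _.
Arguments cmp_assoc {c A B D E} h g f.
Arguments cmp_id_l {c A B} f.
Arguments cmp_id_r {c A B} f.

Notation "g ∘ f" := (cmp g f) (at level 40, left associativity).

Unset Implicit Arguments.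
Record FinLim (C : Category) := mkFinLim {
  term : C;
  bang : forall A : C, hom A term;
  bang_uniq : forall (A : C) (f g : hom A term), f = g;
  pb : forall (A B D : C) (f : hom A D) (g : hom B D), C;
  pb1 : forall (A B D : C) (f : hom A D) (g : hom B D), hom (pb A B D f g) A;
  pb2 : forall (A B D : C) (f : hom A D) (g : hom B D), hom (pb A B D f g) B;
  pb_comm : forall (A B D : C) (f : hom A D) (g : hom B D),
      f ∘ pb1 A B D f g = g ∘ pb2 A B D f g;
  pb_pair : forall (A B D : C) (f : hom A D) (g : hom B D)
      (T : C) (u : hom T A) (v : hom T B), f ∘ u = g ∘ v -> hom T (pb A B D f g);
  pb_pair1 : forall (A B D : C) (f : hom A D) (g : hom B D)
      (T : C) (u : hom T A) (v : hom T B) (H : f ∘ u = g ∘ v),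
      pb1 A B D f g ∘ pb_pair A B D f g T u v H = u;
  pb_pair2 : forall (A B D : C) (f : hom A D) (g : hom B D)
      (T : C) (u : hom T A) (v : hom T B) (H : f ∘ u = g ∘ v),
      pb2 A B D f g ∘ pb_pair A B D f g T u v H = v;
  pb_uniq : forall (A B D : C) (f : hom A D) (g : hom B D)
      (T : C) (h k : hom T (pb A B D f g)),
      pb1 A B D f g ∘ h = pb1 A B D f g ∘ k ->
      pb2 A B D f g ∘ h = pb2 A B D f g ∘ k -> h = k }.

Set Implicit Arguments.
Arguments term {C} f0.
Arguments bang {C} f0 A.
Arguments bang_uniq {C} f0 {A} f g.
Arguments pb {C} f0 {A B D} f g.
Arguments pb1 {C} f0 {A B D} f g.
Arguments pb2 {C} f0 {A B D} f g.
Arguments pb_comm {C} f0 {A B D} f g.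
Arguments pb_pair {C} f0 {A B D f g T u v} H.

Section Defs.
Context {C : Category} (L : FinLim C).

Definition is_mono {A B : C} (m : hom A B) : Prop :=
  forall (T : C) (h k : hom T A), m ∘ h = m ∘ k -> h = k.

Definition is_iso {A B : C} (f : hom A B) : Prop :=
  exists g : hom B A, g ∘ f = idm A /\ f ∘ g = idm B.

Definition subterminal (X : C) : Prop := is_mono (bang L X).

Definition prod (A B : C) : C := pb L (bang L A) (bang L B).
Definition pr1 {A B : C} : hom (prod A B) A := pb1 L (bang L A) (bang L B).
Definition pr2 {A B : C} : hom (prod A B) B := pb2 L (bang L A) (bang L B).
Definition pairP {T A B : C} (u : hom T A) (v : hom T B) : hom T (prod A B) :=
  pb_pair L (bang_uniq L (bang L A ∘ u) (bang L B ∘ v)).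

(* A point (A, f, s) over X together with a multiplication
   m : (A,f,s) x (A,f,s) -> (A,f,s) and an inverse i : (A,f,s) -> (A,f,s),
   both morphisms of Pt_X.  The product (A,f,s) x (A,f,s) in Pt_X is the
   pullback A x_X A = pb f f with section <s,s>.  The unit
   (X,1,1) -> (A,f,s) of any internal monoid in Pt_X is necessarily s. *)
Record PtGroupData (X : C) := {
  pg_A : C;
  pg_f : hom pg_A X;
  pg_s : hom X pg_A;
  pg_fs : pg_f ∘ pg_s = idm X;
  pg_m : hom (pb L pg_f pg_f) pg_A;
  pg_i : hom pg_A pg_A;
  pg_fm : pg_f ∘ pg_m = pg_f ∘ pb1 L pg_f pg_f;
  pg_fi : pg_f ∘ pg_i = pg_f }.

Section PtGroup.
Context {X : C} (G : PtGroupData X).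
Let A := pg_A G.
Let f := pg_f G.
Let s := pg_s G.
Let m := pg_m G.
Let i := pg_i G.
Let P2 := pb L f f.
Let p1 : hom P2 A := pb1 L f f.
Let p2 : hom P2 A := pb2 L f f.
Let P3 := pb L (f ∘ p1) f.
Let q1 : hom P3 P2 := pb1 L (f ∘ p1) f.
Let q2 : hom P3 A := pb2 L (f ∘ p1) f.

Lemma pg_ss_ok : f ∘ s = f ∘ s.
Proof. reflexivity. Qed.

Lemma pg_mx1_ok : f ∘ (m ∘ q1) = f ∘ q2.
Proof.
  rewrite cmp_assoc. unfold f, m. rewrite pg_fm. exact (pb_comm L (f ∘ p1) f).
Qed.

Lemma pg_inner_ok : f ∘ (p2 ∘ q1) = f ∘ q2.
Proof.
  rewrite cmp_assoc. transitivity ((f ∘ p1) ∘ q1).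
  - apply (f_equal (fun h => h ∘ q1)). symmetry. exact (pb_comm L f f).
  - exact (pb_comm L (f ∘ p1) f).
Qed.

Definition pg_inner : hom P3 P2 := pb_pair L pg_inner_ok.

Lemma pg_1xm_ok : f ∘ (p1 ∘ q1) = f ∘ (m ∘ pg_inner).
Proof.
  symmetry.
  etransitivity. { apply cmp_assoc. }
  etransitivity. { apply (f_equal (fun h => h ∘ pg_inner)). exact (pg_fm G). }
  etransitivity. { symmetry. apply cmp_assoc. }
  etransitivity. { apply (f_equal (fun h => f ∘ h)). apply pb_pair1. }
  etransitivity. { apply cmp_assoc. }
  etransitivity. { apply (f_equal (fun h => h ∘ q1)). symmetry. exact (pb_comm L f f). }
  symmetry. apply cmp_assoc.
Qed.

(* m x 1 and (1 x m) o assoc, as maps P3 -> P2 *)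
Definition pg_mx1 : hom P3 P2 := pb_pair L pg_mx1_ok.
Definition pg_1xm : hom P3 P2 := pb_pair L pg_1xm_ok.

Lemma pg_unitl_ok : f ∘ (s ∘ f) = f ∘ idm A.
Proof. rewrite cmp_assoc. unfold f, s. rewrite pg_fs, cmp_id_l, cmp_id_r. reflexivity. Qed.
Lemma pg_unitr_ok : f ∘ idm A = f ∘ (s ∘ f).
Proof. symmetry. exact pg_unitl_ok. Qed.
Lemma pg_invl_ok : f ∘ i = f ∘ idm A.
Proof. rewrite cmp_id_r. exact (pg_fi G). Qed.
Lemma pg_invr_ok : f ∘ idm A = f ∘ i.
Proof. symmetry. exact pg_invl_ok. Qed.

Definition IsPtGroup : Prop :=
  (* m and i preserve the sections, i.e. are morphisms in Pt_X *)
  m ∘ pb_pair L pg_ss_ok = s /\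
  i ∘ s = s /\
  m ∘ pg_mx1 = m ∘ pg_1xm /\
  m ∘ pb_pair L pg_unitl_ok = idm A /\
  m ∘ pb_pair L pg_unitr_ok = idm A /\
  m ∘ pb_pair L pg_invl_ok = s ∘ f /\
  m ∘ pb_pair L pg_invr_ok = s ∘ f.
End PtGroup.

Definition AllPtGroupsTrivial : Prop :=
  forall (X : C) (G : PtGroupData X), IsPtGroup G -> is_iso (pg_f G).

(* X1 x_{X0} X1 = pb d1 d0 : pairs (a, b) with d1 a = d0 b, composite
   c(a,b) : d0 a -> d1 b. *)
Record GroupoidData := {
  gd_X0 : C;
  gd_X1 : C;
  gd_d0 : hom gd_X1 gd_X0;
  gd_d1 : hom gd_X1 gd_X0;
  gd_e : hom gd_X0 gd_X1;
  gd_c : hom (pb L gd_d1 gd_d0) gd_X1;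
  gd_d0e : gd_d0 ∘ gd_e = idm gd_X0;
  gd_d1e : gd_d1 ∘ gd_e = idm gd_X0;
  gd_d0c : gd_d0 ∘ gd_c = gd_d0 ∘ pb1 L gd_d1 gd_d0;
  gd_d1c : gd_d1 ∘ gd_c = gd_d1 ∘ pb2 L gd_d1 gd_d0 }.

Section Groupoid.
Context (G : GroupoidData).
Let X0 := gd_X0 G.
Let X1 := gd_X1 G.
Let d0 := gd_d0 G.
Let d1 := gd_d1 G.
Let e := gd_e G.
Let c := gd_c G.
Let P2 := pb L d1 d0.
Let p1 : hom P2 X1 := pb1 L d1 d0.
Let p2 : hom P2 X1 := pb2 L d1 d0.
Let P3 := pb L (d1 ∘ p2) d0.
Let q1 : hom P3 P2 := pb1 L (d1 ∘ p2) d0.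
Let q2 : hom P3 X1 := pb2 L (d1 ∘ p2) d0.

Lemma gd_cx1_ok : d1 ∘ (c ∘ q1) = d0 ∘ q2.
Proof.
  rewrite cmp_assoc. unfold d1, c. rewrite gd_d1c. exact (pb_comm L (d1 ∘ p2) d0).
Qed.
Lemma gd_inner_ok : d1 ∘ (p2 ∘ q1) = d0 ∘ q2.
Proof. rewrite cmp_assoc. exact (pb_comm L (d1 ∘ p2) d0). Qed.
Definition gd_inner : hom P3 P2 := pb_pair L gd_inner_ok.
Lemma gd_1xc_ok : d1 ∘ (p1 ∘ q1) = d0 ∘ (c ∘ gd_inner).
Proof.
  symmetry.
  etransitivity. { apply cmp_assoc. }
  etransitivity. { apply (f_equal (fun h => h ∘ gd_inner)). exact (gd_d0c G). }
  etransitivity. { symmetry. apply cmp_assoc. }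
  etransitivity. { apply (f_equal (fun h => d0 ∘ h)). apply pb_pair1. }
  etransitivity. { apply cmp_assoc. }
  etransitivity. { apply (f_equal (fun h => h ∘ q1)). symmetry. exact (pb_comm L d1 d0). }
  symmetry. apply cmp_assoc.
Qed.
Definition gd_cx1 : hom P3 P2 := pb_pair L gd_cx1_ok.
Definition gd_1xc : hom P3 P2 := pb_pair L gd_1xc_ok.

Lemma gd_unitl_ok : d1 ∘ (e ∘ d0) = d0 ∘ idm X1.
Proof. rewrite cmp_assoc. unfold d1, e. rewrite gd_d1e, cmp_id_l, cmp_id_r. reflexivity. Qed.
Lemma gd_unitr_ok : d1 ∘ idm X1 = d0 ∘ (e ∘ d1).
Proof. rewrite cmp_assoc. unfold d0, e. rewrite gd_d0e, cmp_id_l, cmp_id_r. reflexivity. Qed.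

Lemma gd_invr_ok (i : hom X1 X1) (H0 : d0 ∘ i = d1) : d1 ∘ idm X1 = d0 ∘ i.
Proof. rewrite cmp_id_r. symmetry. exact H0. Qed.
Lemma gd_invl_ok (i : hom X1 X1) (H1 : d1 ∘ i = d0) : d1 ∘ i = d0 ∘ idm X1.
Proof. rewrite cmp_id_r. exact H1. Qed.

Definition IsGroupoid : Prop :=
  c ∘ gd_cx1 = c ∘ gd_1xc /\
  c ∘ pb_pair L gd_unitl_ok = idm X1 /\
  c ∘ pb_pair L gd_unitr_ok = idm X1 /\
  exists (i : hom X1 X1) (H0 : d0 ∘ i = d1) (H1 : d1 ∘ i = d0),
    c ∘ pb_pair L (gd_invr_ok H0) = e ∘ d0 /\
    c ∘ pb_pair L (gd_invl_ok H1) = e ∘ d1.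
End Groupoid.

Definition AllGroupoidsEqRel : Prop :=
  forall G : GroupoidData, IsGroupoid G ->
    is_mono (pairP (gd_d0 G) (gd_d1 G)).

Definition pair3 {T X : C} (a b c : hom T X) : hom T (prod X (prod X X)) :=
  pairP a (pairP b c).

Definition IsAssocMaltsev (X : C) (p : hom (prod X (prod X X)) X) : Prop :=
  p ∘ pair3 pr1 pr2 pr2 = pr1 /\
  p ∘ pair3 pr1 pr1 pr2 = pr2 /\
  let x : hom (prod X (prod X (prod X (prod X X)))) X := pr1 in
  let y := pr1 ∘ pr2 in
  let z := pr1 ∘ pr2 ∘ pr2 in
  let u := pr1 ∘ pr2 ∘ pr2 ∘ pr2 in
  let v := pr2 ∘ pr2 ∘ pr2 ∘ pr2 in
  p ∘ pair3 x y (p ∘ pair3 z u v) = p ∘ pair3 (p ∘ pair3 x y z) u v.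

End Defs.

(* Main.v *)
Require Import Defs.
Set Implicit Arguments.
Unset Strict Implicit.

Section Gen.
Context {C : Category} (L : FinLim C).

Lemma pp1 {A B D : C} {f : hom A D} {g : hom B D} {T : C} {u : hom T A} {v : hom T B}
  (H : f ∘ u = g ∘ v) : pb1 L f g ∘ pb_pair L H = u.
Proof. apply pb_pair1. Qed.
Lemma pp2 {A B D : C} {f : hom A D} {g : hom B D} {T : C} {u : hom T A} {v : hom T B}
  (H : f ∘ u = g ∘ v) : pb2 L f g ∘ pb_pair L H = v.
Proof. apply pb_pair2. Qed.
Lemma pp1c {A B D : C} {f : hom A D} {g : hom B D} {T : C} {u : hom T A} {v : hom T B}
  (H : f ∘ u = g ∘ v) {T'} (t : hom T' T) : pb1 L f g ∘ (pb_pair L H ∘ t) = u ∘ t.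
Proof. rewrite cmp_assoc, pp1. reflexivity. Qed.
Lemma pp2c {A B D : C} {f : hom A D} {g : hom B D} {T : C} {u : hom T A} {v : hom T B}
  (H : f ∘ u = g ∘ v) {T'} (t : hom T' T) : pb2 L f g ∘ (pb_pair L H ∘ t) = v ∘ t.
Proof. rewrite cmp_assoc, pp2. reflexivity. Qed.

Lemma pbext {A B D : C} {f : hom A D} {g : hom B D} {T : C} (h k : hom T (pb L f g)) :
  pb1 L f g ∘ h = pb1 L f g ∘ k -> pb2 L f g ∘ h = pb2 L f g ∘ k -> h = k.
Proof. apply pb_uniq. Qed.

Lemma pp_ext {A B D : C} {f : hom A D} {g : hom B D} {T : C} {u u' : hom T A} {v v' : hom T B}
  (H : f ∘ u = g ∘ v) (H' : f ∘ u' = g ∘ v') : u = u' -> v = v' -> pb_pair L H = pb_pair L H'.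
Proof. intros. apply pbext; rewrite !pp1 || rewrite !pp2; assumption. Qed.

Lemma pbc_ok {A B D : C} {f : hom A D} {g : hom B D} {T : C} {u : hom T A} {v : hom T B}
  (H : f ∘ u = g ∘ v) {T'} (t : hom T' T) : f ∘ (u ∘ t) = g ∘ (v ∘ t).
Proof. rewrite !cmp_assoc, H. reflexivity. Qed.

Lemma pp_comp {A B D : C} {f : hom A D} {g : hom B D} {T : C} {u : hom T A} {v : hom T B}
  (H : f ∘ u = g ∘ v) {T'} (t : hom T' T) : pb_pair L H ∘ t = pb_pair L (pbc_ok H t).
Proof. apply pbext; rewrite pp1c, pp1 || rewrite pp2c, pp2; reflexivity. Qed.

Lemma pp_comp' {A B D : C} {f : hom A D} {g : hom B D} {T : C} {u : hom T A} {v : hom T B}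
  (H : f ∘ u = g ∘ v) {T'} (t : hom T' T) {u' v'} (H' : f ∘ u' = g ∘ v') :
  u' = u ∘ t -> v' = v ∘ t -> pb_pair L H' = pb_pair L H ∘ t.
Proof. intros. rewrite pp_comp. apply pp_ext; assumption. Qed.

Lemma pb_eta {A B D : C} {f : hom A D} {g : hom B D} {T : C} (w : hom T (pb L f g))
  (H : f ∘ (pb1 L f g ∘ w) = g ∘ (pb2 L f g ∘ w)) : w = pb_pair L H.
Proof. apply pbext; rewrite ?pp1, ?pp2; reflexivity. Qed.

Lemma pr1P {T A B : C} (u : hom T A) (v : hom T B) : pr1 L ∘ pairP L u v = u.
Proof. apply pp1. Qed.
Lemma pr2P {T A B : C} (u : hom T A) (v : hom T B) : pr2 L ∘ pairP L u v = v.
Proof. apply pp2. Qed.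
Lemma prext {T A B : C} (h k : hom T (prod L A B)) :
  pr1 L ∘ h = pr1 L ∘ k -> pr2 L ∘ h = pr2 L ∘ k -> h = k.
Proof. apply pb_uniq. Qed.
Lemma pairP_comp {T A B : C} (u : hom T A) (v : hom T B) {T'} (t : hom T' T) :
  pairP L u v ∘ t = pairP L (u ∘ t) (v ∘ t).
Proof. apply prext; rewrite cmp_assoc, ?pr1P, ?pr2P; reflexivity. Qed.
Lemma pr1Pc {T A B : C} (u : hom T A) (v : hom T B) {T'} (t : hom T' T) : pr1 L ∘ (pairP L u v ∘ t) = u ∘ t.
Proof. rewrite cmp_assoc, pr1P. reflexivity. Qed.
Lemma pr2Pc {T A B : C} (u : hom T A) (v : hom T B) {T'} (t : hom T' T) : pr2 L ∘ (pairP L u v ∘ t) = v ∘ t.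
Proof. rewrite cmp_assoc, pr2P. reflexivity. Qed.
Lemma pairP_ext {T A B : C} (u u' : hom T A) (v v' : hom T B) : u = u' -> v = v' -> pairP L u v = pairP L u' v'.
Proof. intros; subst; reflexivity. Qed.

End Gen.

Unset Implicit Arguments.
Unset Strict Implicit.

Section El.
Context {C : Category} (L : FinLim C).

Definition ElGroupoid {X0 X1 : C} (d0 d1 : hom X1 X0) (e : hom X0 X1)
  (c : hom (pb L d1 d0) X1) (i : hom X1 X1) : Prop :=
  (forall T (a b k x y : hom T X1) (Hab : d1∘a = d0∘b) (Hbk : d1∘b = d0∘k)
     (Hx : d1∘x = d0∘k) (Hy : d1∘a = d0∘y),
     x = c ∘ pb_pair L Hab -> y = c ∘ pb_pair L Hbk -> c ∘ pb_pair L Hx = c ∘ pb_pair L Hy) /\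
  (forall T (a u : hom T X1) (H : d1∘u = d0∘a), u = e∘(d0∘a) -> c∘pb_pair L H = a) /\
  (forall T (a v : hom T X1) (H : d1∘a = d0∘v), v = e∘(d1∘a) -> c∘pb_pair L H = a) /\
  (forall T (a v : hom T X1) (H : d1∘a = d0∘v), v = i∘a -> c∘pb_pair L H = e∘(d0∘a)) /\
  (forall T (a u : hom T X1) (H : d1∘u = d0∘a), u = i∘a -> c∘pb_pair L H = e∘(d1∘a)).

Lemma groupoid_el (G : GroupoidData L) : IsGroupoid G ->
  exists i, gd_d0 G ∘ i = gd_d1 G /\ gd_d1 G ∘ i = gd_d0 G /\
    ElGroupoid (gd_d0 G) (gd_d1 G) (gd_e G) (gd_c G) i.
Proof.
  intros [Has [Hul [Hur [i [H0 [H1 [Hir Hil]]]]]]].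
  exists i. split; [exact H0|]. split; [exact H1|].
  destruct G as [X0 X1 d0 d1 e c d0e d1e d0c d1c]. simpl in *.
  split; [|split; [|split; [|split]]].
  - intros T a b k x y Hab Hbk Hx Hy Ex Ey.
    assert (W : (d1 ∘ pb2 L d1 d0) ∘ pb_pair L Hab = d0 ∘ k) by (rewrite <- cmp_assoc, pp2; exact Hbk).
    set (w := @pb_pair _ L _ _ _ (d1 ∘ pb2 L d1 d0) d0 _ (pb_pair L Hab) k W).
    transitivity (c ∘ (gd_cx1 (Build_GroupoidData d0e d1e d0c d1c) ∘ w)).
    { f_equal. unfold gd_cx1, w. simpl. apply pp_comp'.
      - rewrite <- cmp_assoc, pp1. exact Ex.
      - rewrite pp2. reflexivity. }
    rewrite cmp_assoc. etransitivity; [apply (f_equal (fun h => h ∘ w)); exact Has|]. rewrite <- cmp_assoc. f_equal.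
    unfold gd_1xc, w. simpl. symmetry. apply pp_comp'.
    + rewrite <- cmp_assoc, pp1, pp1. reflexivity.
    + rewrite Ey. rewrite <- cmp_assoc. f_equal. unfold gd_inner. simpl.
      apply pp_comp'.
      * rewrite <- cmp_assoc, pp1, pp2. reflexivity.
      * rewrite pp2. reflexivity.
  - intros T a u H Eu. simpl in Hul.
    transitivity (c ∘ (pb_pair L (gd_unitl_ok (Build_GroupoidData d0e d1e d0c d1c)) ∘ a)).
    + f_equal. apply pp_comp'.
      * rewrite Eu, cmp_assoc. reflexivity.
      * rewrite cmp_id_l. reflexivity.
    + rewrite cmp_assoc. simpl. rewrite Hul, cmp_id_l. reflexivity.
  - intros T a v H Ev. simpl in Hur.
    transitivity (c ∘ (pb_pair L (gd_unitr_ok (Build_GroupoidData d0e d1e d0c d1c)) ∘ a)).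
    + f_equal. apply pp_comp'.
      * rewrite cmp_id_l. reflexivity.
      * rewrite Ev, cmp_assoc. reflexivity.
    + rewrite cmp_assoc. simpl. rewrite Hur, cmp_id_l. reflexivity.
  - intros T a v H Ev. simpl in Hir.
    transitivity (c ∘ (pb_pair L (gd_invr_ok (G:=Build_GroupoidData d0e d1e d0c d1c) H0) ∘ a)).
    + f_equal. apply pp_comp'.
      * rewrite cmp_id_l. reflexivity.
      * exact Ev.
    + rewrite cmp_assoc. simpl. rewrite Hir, cmp_assoc. reflexivity.
  - intros T a u H Eu. simpl in Hil.
    transitivity (c ∘ (pb_pair L (gd_invl_ok (G:=Build_GroupoidData d0e d1e d0c d1c) H1) ∘ a)).
    + f_equal. apply pp_comp'.
      * exact Eu.
      * rewrite cmp_id_l. reflexivity.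
    + rewrite cmp_assoc. simpl. rewrite Hil, cmp_assoc. reflexivity.
Qed.

Lemma el_groupoid (G : GroupoidData L) (i : hom (gd_X1 G) (gd_X1 G))
  (H0 : gd_d0 G ∘ i = gd_d1 G) (H1 : gd_d1 G ∘ i = gd_d0 G) :
  ElGroupoid (gd_d0 G) (gd_d1 G) (gd_e G) (gd_c G) i -> IsGroupoid G.
Proof.
  intros [Eas [Eul [Eur [Eir Eil]]]].
  destruct G as [X0 X1 d0 d1 e c d0e d1e d0c d1c]. simpl in *.
  unfold IsGroupoid; simpl.
  split; [|split; [|split]].
  - unfold gd_cx1, gd_1xc. simpl.
    assert (Hab : d1 ∘ (pb1 L d1 d0 ∘ pb1 L (d1 ∘ pb2 L d1 d0) d0)
                = d0 ∘ (pb2 L d1 d0 ∘ pb1 L (d1 ∘ pb2 L d1 d0) d0)).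
    { rewrite !cmp_assoc, (pb_comm L d1 d0). reflexivity. }
    eapply (Eas _ _ _ _ _ _ Hab).
    + f_equal. apply pb_eta.
    + reflexivity.
  - apply Eul. rewrite cmp_id_r. reflexivity.
  - apply Eur. rewrite cmp_id_r. reflexivity.
  - exists i, H0, H1. split.
    + etransitivity; [eapply (Eir _ (idm _) i); apply eq_sym, cmp_id_r |]. rewrite cmp_id_r. reflexivity.
    + etransitivity; [eapply (Eil _ (idm _) i); apply eq_sym, cmp_id_r |]. rewrite cmp_id_r. reflexivity.
Qed.

Lemma group_el {X : C} (G : PtGroupData L X) : IsPtGroup G ->
  ElGroupoid (pg_f G) (pg_f G) (pg_s G) (pg_m G) (pg_i G).
Proof.
  intros [Hss [His [Has [Hul [Hur [Hil Hir]]]]]].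
  destruct G as [A f s fs m i fm fi]. simpl in *.
  split; [|split; [|split; [|split]]].
  - intros T a b k x y Hab Hbk Hx Hy Ex Ey.
    assert (W : (f ∘ pb1 L f f) ∘ pb_pair L Hab = f ∘ k) by (rewrite <- cmp_assoc, pp1, Hab; exact Hbk).
    set (w := @pb_pair _ L _ _ _ (f ∘ pb1 L f f) f _ (pb_pair L Hab) k W).
    transitivity (m ∘ (pg_mx1 (Build_PtGroupData fs fm fi) ∘ w)).
    { f_equal. unfold pg_mx1, w. simpl. apply pp_comp'.
      - rewrite <- cmp_assoc, pp1. exact Ex.
      - rewrite pp2. reflexivity. }
    rewrite cmp_assoc. etransitivity; [apply (f_equal (fun h => h ∘ w)); exact Has|].
    rewrite <- cmp_assoc. f_equal.
    unfold pg_1xm, w. simpl. symmetry. apply pp_comp'.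
    + rewrite <- cmp_assoc, pp1, pp1. reflexivity.
    + rewrite Ey. rewrite <- cmp_assoc. f_equal. unfold pg_inner. simpl.
      apply pp_comp'.
      * rewrite <- cmp_assoc, pp1, pp2. reflexivity.
      * rewrite pp2. reflexivity.
  - intros T a u H Eu.
    transitivity (m ∘ (pb_pair L (pg_unitl_ok (Build_PtGroupData fs fm fi)) ∘ a)).
    + f_equal. apply pp_comp'.
      * rewrite Eu, cmp_assoc. reflexivity.
      * rewrite cmp_id_l. reflexivity.
    + rewrite cmp_assoc. etransitivity; [apply (f_equal (fun h => h ∘ a)); exact Hul|]. apply cmp_id_l.
  - intros T a v H Ev.
    transitivity (m ∘ (pb_pair L (pg_unitr_ok (Build_PtGroupData fs fm fi)) ∘ a)).
    + f_equal. apply pp_comp'.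
      * rewrite cmp_id_l. reflexivity.
      * rewrite Ev, cmp_assoc. reflexivity.
    + rewrite cmp_assoc. etransitivity; [apply (f_equal (fun h => h ∘ a)); exact Hur|]. apply cmp_id_l.
  - intros T a v H Ev.
    transitivity (m ∘ (pb_pair L (pg_invr_ok (Build_PtGroupData fs fm fi)) ∘ a)).
    + f_equal. apply pp_comp'.
      * rewrite cmp_id_l. reflexivity.
      * exact Ev.
    + rewrite cmp_assoc. etransitivity; [apply (f_equal (fun h => h ∘ a)); exact Hir|]. apply eq_sym, cmp_assoc.
  - intros T a u H Eu.
    transitivity (m ∘ (pb_pair L (pg_invl_ok (Build_PtGroupData fs fm fi)) ∘ a)).
    + f_equal. apply pp_comp'.
      * exact Eu.
      * rewrite cmp_id_l. reflexivity.
    + rewrite cmp_assoc. etransitivity; [apply (f_equal (fun h => h ∘ a)); exact Hil|]. apply eq_sym, cmp_assoc.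
Qed.

Lemma el_group {X : C} (G : PtGroupData L X) :
  ElGroupoid (pg_f G) (pg_f G) (pg_s G) (pg_m G) (pg_i G) -> IsPtGroup G.
Proof.
  intros [Eas [Eul [Eur [Eir Eil]]]].
  destruct G as [A f s fs m i fm fi]. simpl in *.
  unfold IsPtGroup; simpl.
  split; [|split; [|split; [|split; [|split; [|split]]]]].
  - apply Eul. rewrite fs, cmp_id_r. reflexivity.
  - assert (H : f ∘ (i ∘ s) = f ∘ s) by (rewrite cmp_assoc, fi; reflexivity).
    transitivity (m ∘ pb_pair L H).
    + symmetry. apply Eur. rewrite (cmp_assoc f i s), fi, fs, cmp_id_r. reflexivity.
    + rewrite (Eil _ _ _ _ eq_refl), fs, cmp_id_r. reflexivity.
  - unfold pg_mx1, pg_1xm. simpl.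
    assert (Hab : f ∘ (pb1 L f f ∘ pb1 L (f ∘ pb1 L f f) f)
                = f ∘ (pb2 L f f ∘ pb1 L (f ∘ pb1 L f f) f)).
    { rewrite !cmp_assoc, (pb_comm L f f). reflexivity. }
    eapply (Eas _ _ _ _ _ _ Hab).
    + f_equal. apply pb_eta.
    + reflexivity.
  - apply Eul. rewrite cmp_id_r. reflexivity.
  - apply Eur. rewrite cmp_id_r. reflexivity.
  - etransitivity; [eapply (Eil _ (idm _) i); apply eq_sym, cmp_id_r |]. rewrite cmp_id_r. reflexivity.
  - etransitivity; [eapply (Eir _ (idm _) i); apply eq_sym, cmp_id_r |]. rewrite cmp_id_r. reflexivity.
Qed.
End El.

Unset Implicit Arguments.

Section Loop.
Context {C : Category} (L : FinLim C).
Context {X0 X1 : C} (d0 d1 : hom X1 X0) (e : hom X0 X1) (c : hom (pb L d1 d0) X1)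
  (i : hom X1 X1) (d0e : d0 ∘ e = idm X0) (d1e : d1 ∘ e = idm X0)
  (d0c : d0 ∘ c = d0 ∘ pb1 L d1 d0) (d1c : d1 ∘ c = d1 ∘ pb2 L d1 d0)
  (H0 : d0 ∘ i = d1) (H1 : d1 ∘ i = d0) (E : ElGroupoid L d0 d1 e c i).

Notation Pd := (pairP L d0 d1).
Notation dl := (pairP L (idm X0) (idm X0)).
Notation LA := (pb L Pd dl).
Notation io := (pb1 L Pd dl).
Notation be := (pb2 L Pd dl).

Lemma intoA_ok {T} (l : hom T X1) (x : hom T X0) : d0 ∘ l = x -> d1 ∘ l = x -> Pd ∘ l = dl ∘ x.
Proof. intros. rewrite !pairP_comp. apply pairP_ext; rewrite cmp_id_l; assumption. Qed.

Lemma ld0 : d0 ∘ io = be.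
Proof.
  pose proof (f_equal (fun h => pr1 L ∘ h) (pb_comm L Pd dl)) as K. simpl in K.
  rewrite !pr1Pc, cmp_id_l in K. exact K.
Qed.
Lemma ld1 : d1 ∘ io = be.
Proof.
  pose proof (f_equal (fun h => pr2 L ∘ h) (pb_comm L Pd dl)) as K. simpl in K.
  rewrite !pr2Pc, cmp_id_l in K. exact K.
Qed.

Lemma A_ext {T} (a b : hom T LA) : io ∘ a = io ∘ b -> a = b.
Proof.
  intro K. apply pbext. exact K.   rewrite <- ld0, <- !cmp_assoc. f_equal. exact K.
Qed.

Definition sA : hom X0 LA := pb_pair L (intoA_ok e (idm X0) d0e d1e).
Lemma fsA : be ∘ sA = idm X0.
Proof. apply pp2. Qed.
Lemma ios {T} (x : hom T X0) : io ∘ (sA ∘ x) = e ∘ x.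
Proof. rewrite cmp_assoc. unfold sA. rewrite pp1. reflexivity. Qed.

Lemma lift_ok {T} (a b : hom T LA) : be ∘ a = be ∘ b -> d1 ∘ (io ∘ a) = d0 ∘ (io ∘ b).
Proof. intro K. rewrite !cmp_assoc, ld0, ld1. exact K. Qed.

Definition Hm := lift_ok (pb1 L be be) (pb2 L be be) (pb_comm L be be).
Definition lm := c ∘ pb_pair L Hm.
Lemma Hd0m : d0 ∘ lm = be ∘ pb1 L be be.
Proof. unfold lm. rewrite cmp_assoc, d0c, <- cmp_assoc, pp1, cmp_assoc, ld0. reflexivity. Qed.
Lemma Hd1m : d1 ∘ lm = be ∘ pb1 L be be.
Proof. unfold lm. rewrite cmp_assoc, d1c, <- cmp_assoc, pp2, cmp_assoc, ld1. symmetry. apply pb_comm. Qed.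
Definition mA : hom (pb L be be) LA := pb_pair L (intoA_ok lm _ Hd0m Hd1m).
Lemma fmA : be ∘ mA = be ∘ pb1 L be be.
Proof. apply pp2. Qed.
Lemma Hd0i : d0 ∘ (i ∘ io) = be.
Proof. rewrite cmp_assoc, H0. exact ld1. Qed.
Lemma Hd1i : d1 ∘ (i ∘ io) = be.
Proof. rewrite cmp_assoc, H1. exact ld0. Qed.
Definition iA : hom LA LA := pb_pair L (intoA_ok (i ∘ io) be Hd0i Hd1i).
Lemma fiA : be ∘ iA = be.
Proof. apply pp2. Qed.
Lemma ioi {T} (a : hom T LA) : io ∘ (iA ∘ a) = i ∘ (io ∘ a).
Proof. rewrite cmp_assoc. unfold iA. rewrite pp1, cmp_assoc. reflexivity. Qed.

Lemma iom {T} (a b : hom T LA) (H : be ∘ a = be ∘ b) :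
  io ∘ (mA ∘ pb_pair L H) = c ∘ pb_pair L (lift_ok a b H).
Proof.
  rewrite cmp_assoc. unfold mA. rewrite pp1. unfold lm.
  rewrite <- cmp_assoc. f_equal. symmetry. apply pp_comp'.
  - rewrite <- cmp_assoc, pp1. reflexivity.
  - rewrite <- cmp_assoc, pp2. reflexivity.
Qed.

Lemma El_loop : ElGroupoid L be be sA mA iA.
Proof.
  destruct E as [Eas [Eul [Eur [Eir Eil]]]].
  split; [|split; [|split; [|split]]].
  - intros T a b k x y Hab Hbk Hx Hy Ex Ey. apply A_ext. rewrite !iom.
    apply (Eas _ (io ∘ a) (io ∘ b) (io ∘ k) (io ∘ x) (io ∘ y) (lift_ok a b Hab) (lift_ok b k Hbk)).
    + rewrite Ex, iom. reflexivity.
    + rewrite Ey, iom. reflexivity.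
  - intros T a u H Eu. apply A_ext. rewrite iom. apply Eul.
    rewrite Eu, ios, (cmp_assoc d0 io a), ld0. reflexivity.
  - intros T a v H Ev. apply A_ext. rewrite iom. apply Eur.
    rewrite Ev, ios, (cmp_assoc d1 io a), ld1. reflexivity.
  - intros T a v H Ev. apply A_ext. rewrite iom, ios.
    etransitivity; [apply Eir; rewrite Ev, ioi; reflexivity|].
    rewrite (cmp_assoc d0 io a), ld0. reflexivity.
  - intros T a u H Eu. apply A_ext. rewrite iom, ios.
    etransitivity; [apply Eil; rewrite Eu, ioi; reflexivity|].
    rewrite (cmp_assoc d1 io a), ld1. reflexivity.
Qed.

Definition GA : PtGroupData L X0 := Build_PtGroupData fsA fmA fiA.

Lemma GA_group : IsPtGroup GA.
Proof. apply el_group. exact El_loop. Qed.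

Lemma loop_trivial (Htriv : AllPtGroupsTrivial L) {T} (l : hom T X1) :
  d0 ∘ l = d1 ∘ l -> l = e ∘ (d0 ∘ l).
Proof.
  intro K.
  destruct (Htriv X0 GA GA_group) as [g [Hg1 Hg2]]. change (g ∘ be = idm LA) in Hg1.
  assert (Hs : g = sA).
  { transitivity (g ∘ (be ∘ sA)). rewrite fsA, cmp_id_r. reflexivity.
    rewrite cmp_assoc, Hg1, cmp_id_l. reflexivity. }
  subst g.
  set (l' := pb_pair L (intoA_ok l (d0 ∘ l) eq_refl (eq_sym K))).
  transitivity (io ∘ l'). { unfold l'. rewrite pp1. reflexivity. }
  transitivity (io ∘ (sA ∘ (be ∘ l'))).
  { f_equal. rewrite cmp_assoc. etransitivity; [|apply (f_equal (fun h => h ∘ l')); symmetry; exact Hg1]. symmetry; apply cmp_id_l. }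
  rewrite ios. unfold l'. rewrite pp2. reflexivity.
Qed.
End Loop.

Unset Implicit Arguments.

Section Main.
Context {C : Category} (L : FinLim C).

Lemma eqrel_of_triv : AllPtGroupsTrivial L -> AllGroupoidsEqRel L.
Proof.
  intros Htriv G HG.
  destruct (groupoid_el L G HG) as [i [H0 [H1 E]]].
  destruct G as [X0 X1 d0 d1 e c d0e d1e d0c d1c]; simpl in *.
  pose proof (fun T => @loop_trivial C L X0 X1 d0 d1 e c i d0e d1e d0c d1c H0 H1 E Htriv T) as LT.
  destruct E as [Eas [Eul [Eur [Eir Eil]]]].
  intros T h k Hm.
  assert (E0 : d0 ∘ h = d0 ∘ k).
  { pose proof (f_equal (fun z => pr1 L ∘ z) Hm) as K. simpl in K. rewrite !pr1Pc in K. exact K. }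
  assert (E1 : d1 ∘ h = d1 ∘ k).
  { pose proof (f_equal (fun z => pr2 L ∘ z) Hm) as K. simpl in K. rewrite !pr2Pc in K. exact K. }
  assert (Hl : d1 ∘ h = d0 ∘ (i ∘ k)) by (rewrite cmp_assoc, H0; exact E1).
  set (l := c ∘ pb_pair L Hl).
  assert (Dl0 : d0 ∘ l = d0 ∘ h).
  { unfold l. rewrite cmp_assoc, d0c, <- cmp_assoc, pp1. reflexivity. }
  assert (Dl1 : d1 ∘ l = d0 ∘ k).
  { unfold l. rewrite cmp_assoc, d1c, <- cmp_assoc, pp2, cmp_assoc, H1. reflexivity. }
  assert (Kl : l = e ∘ (d0 ∘ l)) by (apply LT; rewrite Dl0, Dl1; exact E0).
  assert (Hik : d1 ∘ (i ∘ k) = d0 ∘ k) by (rewrite cmp_assoc, H1; reflexivity).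
  assert (H3 : d1 ∘ h = d0 ∘ (c ∘ pb_pair L Hik)).
  { rewrite cmp_assoc, d0c, <- cmp_assoc, pp1. exact Hl. }
  transitivity (c ∘ pb_pair L H3).
  { symmetry. apply Eur. rewrite (Eil _ _ _ _ eq_refl). rewrite E1. reflexivity. }
  transitivity (c ∘ pb_pair L Dl1).
  { symmetry. apply (Eas _ h (i ∘ k) k l _ Hl Hik); reflexivity. }
  apply Eul. rewrite Kl at 1. rewrite Dl0, E0. reflexivity.
Qed.

Lemma triv_of_eqrel : AllGroupoidsEqRel L -> AllPtGroupsTrivial L.
Proof.
  intros Heq X G HG.
  pose proof (group_el L G HG) as E.
  destruct G as [A f s fs m i fm fi]; simpl in *.
  assert (fm2 : f ∘ m = f ∘ pb2 L f f) by (rewrite fm; apply pb_comm).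
  set (GD := @Build_GroupoidData C L X A f f s m fs fs fm fm2).
  assert (HGD : IsGroupoid GD) by (apply (el_groupoid L GD i fi fi E)).
  pose proof (Heq GD HGD) as Hmono. simpl in Hmono.
  exists s. split; [|exact fs].
  apply Hmono. rewrite !pairP_comp. apply pairP_ext;
    rewrite cmp_assoc, fs, cmp_id_l, cmp_id_r; reflexivity.
Qed.
End Main.

Unset Implicit Arguments.

Section Heap.
Context {C : Category} (L : FinLim C) (X : C) (p : hom (prod L X (prod L X X)) X).

Lemma pair3_comp {T T'} (a b c : hom T X) (t : hom T' T) :
  pair3 L a b c ∘ t = pair3 L (a ∘ t) (b ∘ t) (c ∘ t).
Proof. unfold pair3. rewrite !pairP_comp. reflexivity. Qed.

Ltac norm := repeat progress (rewrite <- ?cmp_assoc, ?pair3_comp, ?pr1P, ?pr2P, ?pairP_comp).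

Context (Hp : IsAssocMaltsev p).

Lemma M1 {T} (a b : hom T X) : p ∘ pair3 L a b b = a.
Proof.
  destruct Hp as [K _]. pose proof (f_equal (fun h => h ∘ pairP L a b) K) as K'. simpl in K'.
  norm. rewrite <- ?cmp_assoc, ?pair3_comp, ?pr1P, ?pr2P in K'. exact K'.
Qed.
Lemma M2 {T} (a b : hom T X) : p ∘ pair3 L b b a = a.
Proof.
  destruct Hp as [_ [K _]]. pose proof (f_equal (fun h => h ∘ pairP L b a) K) as K'. simpl in K'.
  rewrite <- ?cmp_assoc, ?pair3_comp, ?pr1P, ?pr2P in K'. exact K'.
Qed.
Lemma M3 {T} (a b c d e : hom T X) :
  p ∘ pair3 L a b (p ∘ pair3 L c d e) = p ∘ pair3 L (p ∘ pair3 L a b c) d e.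
Proof.
  destruct Hp as [_ [_ K]]. cbv zeta in K.
  pose proof (f_equal (fun h => h ∘ pairP L a (pairP L b (pairP L c (pairP L d e)))) K) as K'.
  simpl in K'.
  repeat progress (rewrite <- ?cmp_assoc, ?pair3_comp, ?pr1P, ?pr2P in K'). exact K'.
Qed.

Notation P a b c := (p ∘ pair3 L a b c).
Notation q1 := (pb1 L (@pr1 C L X X) (@pr1 C L X X)).
Notation q2 := (pb2 L (@pr1 C L X X) (@pr1 C L X X)).

Definition hs : hom X (prod L X X) := pairP L (idm X) (idm X).
Lemma hfs : pr1 L ∘ hs = idm X. Proof. apply pr1P. Qed.
Definition hm : hom (pb L (@pr1 C L X X) (@pr1 C L X X)) (prod L X X) :=
  pairP L (pr1 L ∘ q1) (P (pr2 L ∘ q1) (pr1 L ∘ q1) (pr2 L ∘ q2)).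
Lemma hfm : pr1 L ∘ hm = pr1 L ∘ q1. Proof. apply pr1P. Qed.
Definition hi : hom (prod L X X) (prod L X X) := pairP L (pr1 L) (P (pr1 L) (pr2 L) (pr1 L)).
Lemma hfi : pr1 L ∘ hi = pr1 L. Proof. apply pr1P. Qed.

Lemma mpr1 {T} (a b : hom T (prod L X X)) (H : pr1 L ∘ a = pr1 L ∘ b) :
  pr1 L ∘ (hm ∘ pb_pair L H) = pr1 L ∘ a.
Proof. unfold hm. rewrite pr1Pc, <- cmp_assoc, pp1. reflexivity. Qed.
Lemma mpr2 {T} (a b : hom T (prod L X X)) (H : pr1 L ∘ a = pr1 L ∘ b) :
  pr2 L ∘ (hm ∘ pb_pair L H) = P (pr2 L ∘ a) (pr1 L ∘ a) (pr2 L ∘ b).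
Proof. unfold hm. rewrite pr2Pc, <- cmp_assoc, pair3_comp, <- !cmp_assoc, pp1, pp2. reflexivity. Qed.
Lemma ipr1 {T} (a : hom T (prod L X X)) : pr1 L ∘ (hi ∘ a) = pr1 L ∘ a.
Proof. unfold hi. rewrite pr1Pc. reflexivity. Qed.
Lemma ipr2 {T} (a : hom T (prod L X X)) : pr2 L ∘ (hi ∘ a) = P (pr1 L ∘ a) (pr2 L ∘ a) (pr1 L ∘ a).
Proof. unfold hi. rewrite pr2Pc, <- cmp_assoc, pair3_comp. reflexivity. Qed.
Lemma spr1 {T} (x : hom T X) : pr1 L ∘ (hs ∘ x) = x.
Proof. unfold hs. rewrite pr1Pc, cmp_id_l. reflexivity. Qed.
Lemma spr2 {T} (x : hom T X) : pr2 L ∘ (hs ∘ x) = x.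
Proof. unfold hs. rewrite pr2Pc, cmp_id_l. reflexivity. Qed.

Lemma El_heap : ElGroupoid L (pr1 L) (pr1 L) hs hm hi.
Proof.
  split; [|split; [|split; [|split]]].
  - intros T a b k x y Hab Hbk Hx Hy Ex Ey. apply prext.
    + rewrite !mpr1, Ex, mpr1. reflexivity.
    + rewrite !mpr2, Ex, Ey, mpr1, !mpr2, <- Hab. symmetry. apply M3.
  - intros T a u H Eu. apply prext.
    + rewrite mpr1, Eu, spr1. reflexivity.
    + rewrite mpr2, Eu, spr1, spr2. apply M2.
  - intros T a v H Ev. apply prext.
    + rewrite mpr1. reflexivity.
    + rewrite mpr2, Ev, spr2. apply M1.
  - intros T a v H Ev. apply prext.
    + rewrite mpr1, spr1. reflexivity.
    + rewrite mpr2, Ev, spr2, ipr2, M3, M1, M2. reflexivity.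
  - intros T a u H Eu. apply prext.
    + rewrite mpr1, spr1, Eu, ipr1. reflexivity.
    + rewrite mpr2, spr2, Eu, ipr1, ipr2, <- M3, M2, M1. reflexivity.
Qed.

Definition GH : PtGroupData L X := Build_PtGroupData hfs hfm hfi.

Lemma heap_subterminal : AllPtGroupsTrivial L -> subterminal L X.
Proof.
  intros Htriv.
  destruct (Htriv X GH (el_group L GH El_heap)) as [g [Hg1 Hg2]].
  change (g ∘ pr1 L = idm (prod L X X)) in Hg1.
  assert (Mo : forall T (u w : hom T (prod L X X)), pr1 L ∘ u = pr1 L ∘ w -> u = w).
  { intros T u w K.
    transitivity ((g ∘ pr1 L) ∘ u). { rewrite Hg1, cmp_id_l. reflexivity. }
    transitivity ((g ∘ pr1 L) ∘ w). { rewrite <- !cmp_assoc, K. reflexivity. }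
    rewrite Hg1, cmp_id_l. reflexivity. }
  intros T h k _.
  assert (E : pairP L h h = pairP L h k) by (apply Mo; rewrite !pr1P; reflexivity).
  pose proof (f_equal (fun z => pr2 L ∘ z) E) as E'. simpl in E'. rewrite !pr2P in E'. exact E'.
Qed.
End Heap.

Theorem mainTheorem12 (C : Category) (L : FinLim C) :
  (AllPtGroupsTrivial L <-> AllGroupoidsEqRel L) /\
  (AllPtGroupsTrivial L ->
     forall (X : C) (p : hom (prod L X (prod L X X)) X),
       IsAssocMaltsev p -> subterminal L X).
Proof.
  split.
  - split; [apply eqrel_of_triv | apply triv_of_eqrel].
  - intros Htriv X p Hp. exact (heap_subterminal L X p Hp Htriv).
Qed.
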